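(* At a long-run equilibrium under perimeter control of the monocentric city model described in the context, in which the downtown area and the suburban interval $[0,x_f]$ are occupied with positive land rent (and $r_s(x_f)=0$ at the city boundary $x_f$): (i) $$N_d^{p*}=\frac{1}{\mu}\{y_d\}^{\frac{1-\mu}{\mu}}\left(w-C_s^{bp*}\right)^{-\frac1\mu}\left(r_s(0)+r_A\right)A_d,$$ $$N_s^{p*}(x)=\frac{1}{\mu}\{w-C_s^{bp*}-\alpha\tau x\}^{\frac{1-\mu}{\mu}}\left(w-C_s^{bp*}\right)^{-\frac1\mu}\left(r_s(0)+r_A\right)A_s(x);$$ (ii) $$x_f=\frac{w-C_s^{bp*}}{\alpha\tau}\left(\{r_A\}^{-\mu}-\{r_s(0)+r_A\}^{-\mu}\right)\{r_A\}^{\mu};$$ (iii) $r_s(0)$ is determined by $\int_0^{x_f}N_s^{p*}(x)\,dx=N-N_d^{p*}$.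
   Context: Monocentric city: downtown land $A_d>0$ (all jobs) and suburban locations $x\ge0$ with land $A_s(x)>0$; absentee landlords; $N$ homogeneous commuters ($N_d$ downtown, density $N_s(x)$ at $x$). Downtown commuting cost $\alpha T_d$; under perimeter control a suburban commuter at $x$ has commuting cost $C_s^{bp*}+\alpha\tau x$, where $C_s^{bp*}$ is the short-run equilibrium bathtub cost of downtown car traffic under perimeter control, $\alpha>0$ the value of time, $\tau=1/v_f$. Income $w$; utility $z^{1-\mu}a^{\mu}$, $\mu\in(0,1)$; budget $w=z+(r+r_A)a+C$, agricultural rent $r_A>0$, downtown rent $r_d+r_A$, rent $r_s(x)+r_A$ at $x$. Net incomes $y_d=w-\alpha T_d$, $y_s^p(x)=w-C_s^{bp*}-\alpha\tau x$; lot sizes $a=\mu y/(r+r_A)$; indirect utility $U=(1-\mu)^{1-\mu}\mu^\mu y(r+r_A)^{-\mu}$. Long-run equilibrium (utility $U^*$): $U_d=U^*$ if $N_d>0$ ($\le$ otherwise); $U_s(x)=U^*$ if $N_s(x)>0$ ($\le$ otherwise); land clearing $a_dN_d=A_d$ if $r_d>0$ ($\le$ if $r_d=0$), $a_s(x)N_s(x)=A_s(x)$ if $r_s(x)>0$ ($\le$ if $r_s(x)=0$); $N_d+\int_0^\infty N_s(x)dx=N$. *)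

(* Defs.v *)
From Stdlib Require Import Reals Lra.
From Coquelicot Require Import Coquelicot.
Open Scope R_scope.

Definition y_d (w alpha Td : R) : R := w - alpha * Td.
Definition y_sp (w Cs alpha tau x : R) : R := w - Cs - alpha * tau * x.

Definition lot (mu y r rA : R) : R := mu * y / (r + rA).

Definition util (mu y r rA : R) : R :=
  Rpower (1 - mu) (1 - mu) * Rpower mu mu * y * Rpower (r + rA) (- mu).

Definition params_ok (alpha tau mu rA Ad : R) (As : R -> R) : Prop :=
  0 < alpha /\ 0 < tau /\ 0 < mu < 1 /\ 0 < rA /\ 0 < Ad /\
  (forall x, 0 <= x -> 0 < As x).

(* Long-run equilibrium under perimeter control with utility Ustar.
   Rents r_d, r_s(x) are nonnegative (complementary slackness form),
   populations nonnegative. *)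
Definition long_run_eq_p (w alpha tau Td Cs mu rA Ad N : R) (As : R -> R)
    (Nd : R) (Ns : R -> R) (rd : R) (rs : R -> R) (Ustar : R) : Prop :=
  0 <= Nd /\ (forall x, 0 <= x -> 0 <= Ns x) /\
  0 <= rd /\ (forall x, 0 <= x -> 0 <= rs x) /\
  util mu (y_d w alpha Td) rd rA <= Ustar /\
  (0 < Nd -> util mu (y_d w alpha Td) rd rA = Ustar) /\
  (forall x, 0 <= x -> util mu (y_sp w Cs alpha tau x) (rs x) rA <= Ustar) /\
  (forall x, 0 <= x -> 0 < Ns x -> util mu (y_sp w Cs alpha tau x) (rs x) rA = Ustar) /\
  lot mu (y_d w alpha Td) rd rA * Nd <= Ad /\
  (0 < rd -> lot mu (y_d w alpha Td) rd rA * Nd = Ad) /\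
  (forall x, 0 <= x -> lot mu (y_sp w Cs alpha tau x) (rs x) rA * Ns x <= As x) /\
  (forall x, 0 <= x -> 0 < rs x -> lot mu (y_sp w Cs alpha tau x) (rs x) rA * Ns x = As x) /\
  (exists I, is_RInt_gen Ns (at_point 0) (Rbar_locally p_infty) I /\ Nd + I = N).

(* Main.v *)
Require Import Defs.
From Stdlib Require Import Reals Lra.
From Coquelicot Require Import Coquelicot.
Open Scope R_scope.

Lemma Kpos mu : 0 < mu < 1 -> 0 < Rpower (1 - mu) (1 - mu) * Rpower mu mu.
Proof. intros. unfold Rpower. apply Rmult_lt_0_compat; apply exp_pos. Qed.

Lemma rp_pos x y : 0 < Rpower x y.
Proof. unfold Rpower; apply exp_pos. Qed.

Lemma key mu K y Y a b : 0 < mu -> 0 < K -> 0 < y -> 0 < Y -> 0 < a -> 0 < b ->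
  K * y * Rpower a (- mu) = K * Y * Rpower b (- mu) ->
  a / (mu * y) = / mu * Rpower y ((1 - mu) / mu) * Rpower Y (- / mu) * b.
Proof.
  intros Hmu HK Hy HY Ha Hb E.
  assert (E2 : ln (K * y * Rpower a (- mu)) = ln (K * Y * Rpower b (- mu))) by now rewrite E.
  rewrite !ln_mult in E2 by (try apply Rmult_lt_0_compat; try apply rp_pos; auto).
  rewrite !ln_Rpower in E2.
  assert (La : ln a = (ln y - ln Y) / mu + ln b).
  { apply Rmult_eq_reg_l with mu; [|lra]. field_simplify; lra. }
  unfold Rpower.
  transitivity (exp (ln a) / (mu * exp (ln y))); [rewrite !exp_ln; auto|].
  rewrite <- (exp_ln b) at 1 by auto.
  rewrite La.
  replace ((ln y - ln Y) / mu + ln b) with (ln y + ((1 - mu) / mu * ln y + (- / mu * ln Y + ln b))) by (field; lra).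
  rewrite !exp_plus. field. split; [lra|apply Rgt_not_eq, exp_pos].
Qed.

Theorem lemma5 (w alpha tau Td Cs mu rA Ad N : R) (As : R -> R)
    (Nd : R) (Ns : R -> R) (rd : R) (rs : R -> R) (Ustar xf : R) :
  params_ok alpha tau mu rA Ad As ->
  long_run_eq_p w alpha tau Td Cs mu rA Ad N As Nd Ns rd rs Ustar ->
  (* downtown occupied with positive rent *)
  0 < Nd -> 0 < rd ->
  (* suburban interval [0, xf] occupied, positive rent on [0, xf), boundary rent 0 *)
  0 < xf ->
  (forall x, 0 <= x <= xf -> 0 < Ns x) ->
  (forall x, 0 <= x < xf -> 0 < rs x) ->
  rs xf = 0 ->
  (* (i) *)
  Nd = / mu * Rpower (y_d w alpha Td) ((1 - mu) / mu)
         * Rpower (w - Cs) (- / mu) * (rs 0 + rA) * Ad /\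
  (forall x, 0 <= x < xf ->
     Ns x = / mu * Rpower (w - Cs - alpha * tau * x) ((1 - mu) / mu)
              * Rpower (w - Cs) (- / mu) * (rs 0 + rA) * As x) /\
  (* (ii) *)
  xf = (w - Cs) / (alpha * tau)
         * (Rpower rA (- mu) - Rpower (rs 0 + rA) (- mu)) * Rpower rA mu /\
  (* (iii) *)
  is_RInt Ns 0 xf (N - Nd).
Proof.
  intros [Hal [Hta [Hmu [HrA [HAd HAs]]]]]
    [HNd0 [HNs0 [Hrd0 [Hrs0 [Ud [Ude [Us [Use [Ld [Lde [Ls [Lse [II [HI HNI]]]]]]]]]]]]]]
    Nd1 rd1 xf1 Ns1 rs1 rsf.
  set (K := Rpower (1 - mu) (1 - mu) * Rpower mu mu).
  assert (HK : 0 < K) by (apply Kpos; auto).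
  assert (Hutil : forall y r, util mu y r rA = K * y * Rpower (r + rA) (- mu)).
  { intros; unfold util, K; ring. }
  assert (Hpos : forall y r n A, 0 <= r -> 0 < n -> 0 < A -> lot mu y r rA * n = A -> 0 < y).
  { intros y r n A Hr Hn HA E. unfold lot in E.
    destruct (Rle_or_lt y 0) as [Hy|Hy]; [|auto].
    exfalso. assert (mu * y / (r + rA) * n <= 0); [|lra].
    apply Rmult_le_0_r; [|lra]. unfold Rdiv. apply Rmult_le_0_r; [nra|].
    left; apply Rinv_0_lt_compat; lra. }
  assert (Hsol : forall y r n A, 0 <= r -> 0 < y -> lot mu y r rA * n = A -> n = (r + rA) * A / (mu * y)).
  { intros y r n A Hr Hy E. rewrite <- E. unfold lot. field. lra. }
  assert (E0 : w - Cs - alpha * tau * 0 = w - Cs) by ring.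
  assert (H0 : 0 <= 0 < xf) by lra.
  assert (Hyd : 0 < y_d w alpha Td) by (apply (Hpos _ rd Nd Ad); [lra|exact Nd1|exact HAd|apply Lde; auto]).
  assert (HY0 : 0 < w - Cs).
  { rewrite <- E0. apply (Hpos _ (rs 0) (Ns 0) (As 0)). apply Hrs0; lra. apply Ns1; lra. apply HAs; lra.
    apply Lse; [lra| apply rs1; auto]. }
  assert (U0 : Ustar = K * (w - Cs) * Rpower (rs 0 + rA) (- mu)).
  { rewrite <- Hutil. rewrite <- (Use 0) by (try lra; apply Ns1; lra). unfold y_sp. now rewrite E0. }
  assert (HU : 0 < Ustar) by (rewrite U0; apply Rmult_lt_0_compat; [nra|apply rp_pos]).
  assert (Uf : Ustar = K * y_sp w Cs alpha tau xf * Rpower rA (- mu)).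
  { rewrite <- (Use xf) by (try lra; apply Ns1; lra). rewrite Hutil, rsf. f_equal; f_equal; ring. }
  assert (HYf : 0 < y_sp w Cs alpha tau xf).
  { destruct (Rle_or_lt (y_sp w Cs alpha tau xf) 0) as [h|h]; auto.
    exfalso. pose proof (rp_pos rA (-mu)). rewrite Uf in HU.
    assert (K * y_sp w Cs alpha tau xf <= 0) by nra. nra. }
  assert (HPP : Rpower rA (- mu) * Rpower rA mu = 1).
  { rewrite <- Rpower_plus. replace (- mu + mu) with 0 by ring. apply Rpower_O; auto. }
  split; [|split; [|split]].
  - rewrite (Hsol _ _ _ _ Hrd0 Hyd (Lde rd1)).
    replace ((rd + rA) * Ad / (mu * y_d w alpha Td)) with ((rd + rA) / (mu * y_d w alpha Td) * Ad) by (field; split; lra).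
    f_equal. apply key with K; try lra; auto.
    specialize (Hrs0 0 (Rle_refl 0)). lra.
    rewrite <- !Hutil. rewrite (Ude Nd1), U0, Hutil. reflexivity.
  - intros x Hx.
    assert (Hr : 0 <= rs x) by (apply Hrs0; lra).
    assert (Hnx : 0 < Ns x) by (apply Ns1; lra).
    assert (Hyx : 0 < y_sp w Cs alpha tau x).
    { apply (Hpos _ (rs x) (Ns x) (As x)); [exact Hr|exact Hnx|apply HAs; lra|apply Lse; [lra|apply rs1; auto]]. }
    rewrite (Hsol _ _ _ _ Hr Hyx (Lse x (proj1 Hx) (rs1 x Hx))).
    pose proof (Use x (proj1 Hx) Hnx) as Ux.
    unfold y_sp in *.
    replace ((rs x + rA) * As x / (mu * (w - Cs - alpha * tau * x))) with ((rs x + rA) / (mu * (w - Cs - alpha * tau * x)) * As x) by (field; split; lra).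
    f_equal. apply key with K; try lra; auto.
    specialize (Hrs0 0 (Rle_refl 0)). lra.
    rewrite <- !Hutil. rewrite Ux.
    rewrite U0, Hutil. reflexivity.
  - assert (E : y_sp w Cs alpha tau xf * Rpower rA (- mu) = (w - Cs) * Rpower (rs 0 + rA) (- mu)).
    { apply Rmult_eq_reg_l with K; [|lra]. rewrite <- !Rmult_assoc, <- Uf. exact U0. }
    unfold y_sp in E.
    apply Rmult_eq_reg_l with (alpha * tau); [|nra].
    transitivity ((w - Cs) * (Rpower rA (- mu) * Rpower rA mu) - ((w - Cs) * Rpower (rs 0 + rA) (- mu)) * Rpower rA mu).
    2: field; nra.
    rewrite <- E.
    replace ((w - Cs - alpha * tau * xf) * Rpower rA (- mu) * Rpower rA mu) with ((w - Cs - alpha * tau * xf) * (Rpower rA (- mu) * Rpower rA mu)) by ring.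
    rewrite HPP. ring.
  - assert (Hz : forall x, xf < x -> Ns x = 0).
    { intros x Hx. destruct (Rle_or_lt (Ns x) 0) as [h|h].
      - pose proof (HNs0 x ltac:(lra)); lra.
      - exfalso. pose proof (Use x ltac:(lra) h) as Ux. rewrite Hutil in Ux.
        assert (Hr : 0 <= rs x) by (apply Hrs0; lra).
        assert (Hy : y_sp w Cs alpha tau x < y_sp w Cs alpha tau xf) by (unfold y_sp; assert (0 < alpha * tau) by nra; assert (0 < alpha * tau * (x - xf)) by (apply Rmult_lt_0_compat; lra); nra).
        destruct (Rle_or_lt (y_sp w Cs alpha tau x) 0) as [h2|h2].
        + pose proof (rp_pos (rs x + rA) (- mu)). assert (K * y_sp w Cs alpha tau x <= 0) by nra. nra.
        + assert (Rpower (rs x + rA) (- mu) <= Rpower rA (- mu)).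
          { rewrite !Rpower_Ropp. apply Rinv_le_contravar. apply rp_pos.
            apply Rle_Rpower_l; lra. }
          pose proof (rp_pos (rs x + rA) (- mu)). pose proof (rp_pos rA (- mu)).
          assert (K * y_sp w Cs alpha tau x * Rpower (rs x + rA) (- mu) < K * y_sp w Cs alpha tau xf * Rpower rA (- mu)).
          { apply Rle_lt_trans with (K * y_sp w Cs alpha tau x * Rpower rA (- mu)).
            apply Rmult_le_compat_l; nra. apply Rmult_lt_compat_r; nra. }
          lra. }
    assert (Hex : ex_RInt Ns 0 xf).
    { pose proof (HI (fun _ => True) ltac:(exists (mkposreal 1 Rlt_0_1); intros; exact I)) as HP.
      destruct HP as [Q R0 HQ HR HQR].
      destruct HR as [M HM].
      assert (HMb : M < Rmax M xf + 1) by (pose proof (Rmax_l M xf); lra).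
      destruct (HQR 0 (Rmax M xf + 1) HQ (HM _ HMb)) as [y [Hy _]].
      apply (@ex_RInt_Chasles_1 R_CompleteNormedModule Ns 0 xf (Rmax M xf + 1)).
      pose proof (Rmax_r M xf); lra. exists y. exact Hy. }
    assert (Hg : is_RInt_gen Ns (at_point 0) (Rbar_locally p_infty) (plus (RInt Ns 0 xf) 0)).
    { apply (@is_RInt_gen_Chasles R_NormedModule (at_point 0) (Rbar_locally p_infty) _ _ Ns xf (RInt Ns 0 xf) 0).
      { apply (proj2 (is_RInt_gen_at_point Ns 0 xf (RInt Ns 0 xf))). exact (@RInt_correct R_CompleteNormedModule Ns 0 xf Hex). }
      intros P [eps HP].
      exists (fun a => a = xf) (fun b => xf < b).
      - reflexivity.
      - exists xf. auto.
      - intros a b Ha Hb. exists 0. split.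
        + simpl. subst a. apply is_RInt_ext with (fun _ => 0).
          intros x Hx. rewrite Rmin_left in Hx by lra. rewrite Rmax_right in Hx by lra.
          symmetry; apply Hz; lra.
          pose proof (@is_RInt_const R_NormedModule xf b 0) as Hc.
          assert (Hs : scal (b - xf) (0:R_NormedModule) = 0) by (unfold scal; simpl; unfold mult; simpl; ring).
          rewrite Hs in Hc. exact Hc.
        + apply HP. apply ball_center. }
    assert (Ieq : II = RInt Ns 0 xf).
    { rewrite <- (is_RInt_gen_unique _ _ HI).
      rewrite (is_RInt_gen_unique _ _ Hg). unfold plus; simpl. ring. }
    replace (N - Nd) with II by lra. rewrite Ieq. exact (@RInt_correct R_CompleteNormedModule Ns 0 xf Hex).
Qed.
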